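(* Let $M$ be a spherical simply laced diagram and $\mathcal B$ an admissible $W$-orbit of sets of mutually orthogonal positive roots. Then there is a partial order $<$ on $\mathcal B$ with the following properties, for all $B\in\mathcal B$ and nodes $i,j$: (i) $B$ and $r_iB$ are comparable; furthermore, if $(\alpha_i,\beta)=\pm1$ for some $\beta\in B$, then $r_iB\ne B$; (ii) if $i\sim j$ and $\alpha_i\in B^\perp$, then $r_jB<B$ implies $r_ir_jB<r_jB$, and $r_jB>B$ implies $r_ir_jB>r_jB$; (iii) if $i\not\sim j$, $r_iB<B$, $r_jB<B$ and $r_iB\ne r_jB$, then $r_ir_jB<r_jB$ and $r_ir_jB<r_iB$; (iv) if $i\sim j$, $r_iB<B$ and $r_jB<B$, then either $r_ir_jB=r_jB$, or $r_ir_jB<r_jB$, $r_jr_iB<r_iB$, $r_ir_jr_iB<r_ir_jB$ and $r_ir_jr_iB<r_jr_iB$.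
   Context: $M$ has nodes $1,\dots,n$; for distinct nodes, $i\sim j$ means adjacent and $i\not\sim j$ means not adjacent. $W$ is the Weyl group of type $M$ with positive roots $\Phi^+$, fundamental roots $\alpha_i$, $r_i$ the reflection in $\alpha_i$, inner product with $(\alpha_i,\alpha_i)=2$, $(\alpha_i,\alpha_j)=-1$ if $i\sim j$ and $0$ otherwise. For a set $B$ of mutually orthogonal positive roots and $w\in W$, $wB=\Phi^+\cap\{\pm w\beta:\beta\in B\}$; $B^\perp$ is the set of roots orthogonal to all elements of $B$. A $W$-orbit $\mathcal B$ of such sets is admissible if for every $B\in\mathcal B$, all nodes $i,j$ with $i\not\sim j$ and every root $\gamma$ with $\gamma,\gamma-\alpha_i+\alpha_j\in B$, we have $r_iB=r_jB$. *)

(* Defs.v *)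
From HB Require Import structures.
From mathcomp Require Import all_boot all_order all_algebra.
From mathcomp Require Import boolp classical_sets.
Set Implicit Arguments. Unset Strict Implicit. Unset Printing Implicit Defensive.
Import Order.TTheory GRing.Theory Num.Theory.
Local Open Scope ring_scope.

(* A simply laced diagram M on nodes 'I_n is a symmetric irreflexive
   adjacency relation [adj] ("i ~ j" iff adj i j). Vectors of the root
   lattice are integer row vectors in the basis of fundamental roots. *)
Notation vec n := 'rV[int]_n.

Definition diagram n (adj : rel 'I_n) : Prop := irreflexive adj /\ symmetric adj.

Definition gram n (adj : rel 'I_n) : 'M[int]_n :=
  \matrix_(i, j) (if i == j then 2 else if adj i j then -1 else 0).

Definition rform n (adj : rel 'I_n) (x y : vec n) : int :=
  (x *m gram adj *m y^T) 0 0.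

Definition alpha n (i : 'I_n) : vec n := delta_mx 0 i.

Definition refl n (adj : rel 'I_n) (i : 'I_n) (x : vec n) : vec n :=
  x - rform adj x (alpha i) *: alpha i.

(* Elements of W are represented by words in the generators r_i;
   act [:: i1; ...; ik] x = r_i1 (... (r_ik x)). *)
Definition act n (adj : rel 'I_n) (w : seq 'I_n) (x : vec n) : vec n :=
  foldr (refl adj) x w.

(* M is spherical: W is finite, i.e. finitely many words represent
   all elements of W (as linear maps). *)
Definition spherical n (adj : rel 'I_n) : Prop :=
  exists ws : seq (seq 'I_n), forall w : seq 'I_n,
    exists2 w', w' \in ws & forall x, act adj w x = act adj w' x.

Inductive is_root n (adj : rel 'I_n) : vec n -> Prop :=
| root_base i : is_root adj (alpha i)
| root_refl i x : is_root adj x -> is_root adj (refl adj i x).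

Definition is_pos_root n (adj : rel 'I_n) (x : vec n) : Prop :=
  is_root adj x /\ forall j, 0 <= x 0 j.

Definition orth_pos_set n (adj : rel 'I_n) (B : set (vec n)) : Prop :=
  (forall b, B b -> is_pos_root adj b) /\
  (forall b c, B b -> B c -> b <> c -> rform adj b c = 0).

Definition wimg n (adj : rel 'I_n) (w : seq 'I_n) (B : set (vec n)) : set (vec n) :=
  fun x => is_pos_root adj x /\
           exists2 b, B b & (x = act adj w b \/ x = - act adj w b).

Definition W_orbit n (adj : rel 'I_n) (calB : set (set (vec n))) : Prop :=
  exists2 B0, orth_pos_set adj B0 &
    forall B, calB B <-> exists w, B = wimg adj w B0.

Definition admissible n (adj : rel 'I_n) (calB : set (set (vec n))) : Prop :=
  forall B, calB B -> forall i j : 'I_n, i != j -> ~~ adj i j ->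
    forall g, is_root adj g -> B g -> B (g - alpha i + alpha j) ->
      wimg adj [:: i] B = wimg adj [:: j] B.

Definition strict_porder_on T (S : set T) (lt : T -> T -> Prop) : Prop :=
  (forall x, S x -> ~ lt x x) /\
  (forall x y z, S x -> S y -> S z -> lt x y -> lt y z -> lt x z).

(* Main.v *)
Require Import Defs.
From HB Require Import structures.
From mathcomp Require Import all_boot all_order all_algebra.
From mathcomp Require Import boolp classical_sets.
From mathcomp Require Import zify ring lra.
Set Implicit Arguments. Unset Strict Implicit. Unset Printing Implicit Defensive.
Import Order.TTheory GRing.Theory Num.Theory.
Local Open Scope ring_scope.
Section Lin.
Variables (n : nat) (adj : rel 'I_n).
Hypothesis hdiag : diagram adj.

Local Notation G := (gram adj).
Local Notation rf := (rform adj).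

Lemma gram_sym : G^T = G.
Proof.
case: hdiag => hirr hsym.
apply/matrixP => i j; rewrite !mxE eq_sym hsym //.
Qed.

Lemma rformC x y : rf x y = rf y x.
Proof.
rewrite /rform -[in LHS](trmxK (x *m G *m y^T)) [in LHS]mxE.
by rewrite !trmx_mul trmxK gram_sym mulmxA.
Qed.

Lemma rformDl x y z : rf (x + y) z = rf x z + rf y z.
Proof. by rewrite /rform !mulmxDl mxE. Qed.

Lemma rformZl k x z : rf (k *: x) z = k * rf x z.
Proof. by rewrite /rform -!scalemxAl mxE. Qed.

Lemma rformNl x z : rf (- x) z = - rf x z.
Proof. by rewrite -scaleN1r rformZl mulN1r. Qed.

Lemma rformBl x y z : rf (x - y) z = rf x z - rf y z.
Proof. by rewrite rformDl rformNl. Qed.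

Lemma rformDr x y z : rf z (x + y) = rf z x + rf z y.
Proof. by rewrite /rform linearD /= mulmxDr mxE. Qed.

Lemma rformZr k x z : rf z (k *: x) = k * rf z x.
Proof. by rewrite /rform linearZ /= -scalemxAr mxE. Qed.

Lemma rformNr x z : rf z (- x) = - rf z x.
Proof. by rewrite -scaleN1r rformZr mulN1r. Qed.

Lemma rformBr x y z : rf z (x - y) = rf z x - rf z y.
Proof. by rewrite rformDr rformNr. Qed.

Lemma rform0l z : rf 0 z = 0.
Proof. by rewrite /rform !mul0mx mxE. Qed.

Lemma rform_alpha_r x i : rf x (alpha i) = \sum_k x 0 k * G k i.
Proof.
rewrite /rform /alpha trmx_delta -colE mxE !mxE. by [].
Qed.

Lemma rform_alpha i j : rf (alpha i) (alpha j) = G i j.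
Proof.
rewrite rform_alpha_r (bigD1 i) //= big1 => [|k /negbTE hk].
  by rewrite /alpha mxE !eqxx /= mul1r addr0.
by rewrite /alpha mxE hk andbF mul0r.
Qed.

Lemma rform_aa i : rf (alpha i) (alpha i) = 2.
Proof. by rewrite rform_alpha mxE eqxx. Qed.

Lemma rform_adj i j : adj i j -> rf (alpha i) (alpha j) = -1.
Proof.
move=> h; rewrite rform_alpha mxE h; case: eqP => // e.
by case: hdiag => hirr _; move: h; rewrite e hirr.
Qed.

Lemma rform_nadj i j : i != j -> ~~ adj i j -> rf (alpha i) (alpha j) = 0.
Proof. by move=> /negbTE h1 /negbTE h2; rewrite rform_alpha mxE h1 h2. Qed.

Definition ht (x : vec n) : int := \sum_k x 0 k.

Lemma htD x y : ht (x + y) = ht x + ht y.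
Proof. by rewrite /ht -big_split; apply: eq_bigr => k _; rewrite mxE. Qed.

Lemma htZ k x : ht (k *: x) = k * ht x.
Proof. by rewrite /ht mulr_sumr; apply: eq_bigr => l _; rewrite mxE. Qed.

Lemma htN x : ht (- x) = - ht x.
Proof. by rewrite -scaleN1r htZ mulN1r. Qed.

Lemma htB x y : ht (x - y) = ht x - ht y.
Proof. by rewrite htD htN. Qed.

Lemma ht_alpha i : ht (alpha i) = 1.
Proof.
rewrite /ht (bigD1 i) //= big1 => [|k /negbTE hk].
  by rewrite /alpha mxE !eqxx addr0.
by rewrite /alpha mxE hk andbF.
Qed.

Definition cc i x := rf x (alpha i).

Lemma reflE i x : refl adj i x = x - cc i x *: alpha i.
Proof. by []. Qed.

Lemma reflD i x y : refl adj i (x + y) = refl adj i x + refl adj i y.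
Proof. by rewrite !reflE /cc rformDl scalerDl opprD addrACA. Qed.

Lemma reflZ i k x : refl adj i (k *: x) = k *: refl adj i x.
Proof. by rewrite !reflE /cc rformZl scalerBr scalerA. Qed.

Lemma reflN i x : refl adj i (- x) = - refl adj i x.
Proof. by rewrite -!scaleN1r reflZ. Qed.

Lemma cc_refl_same i x : cc i (refl adj i x) = - cc i x.
Proof. rewrite /cc reflE rformBl rformZl rform_aa /cc. ring. Qed.

Lemma refl_invol i x : refl adj i (refl adj i x) = x.
Proof.
by rewrite [in LHS]reflE cc_refl_same reflE scaleNr opprK subrK.
Qed.

Lemma rform_refl i x y : rf (refl adj i x) (refl adj i y) = rf x y.
Proof.
rewrite !reflE rformBl !rformBr !rformZl !rformZr rform_aa /cc.
rewrite (rformC (alpha i) y); ring.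
Qed.

Lemma actD w x y : act adj w (x + y) = act adj w x + act adj w y.
Proof. by elim: w => //= i w ->; rewrite reflD. Qed.

Lemma actZ w k x : act adj w (k *: x) = k *: act adj w x.
Proof. by elim: w => //= i w ->; rewrite reflZ. Qed.

Lemma actN w x : act adj w (- x) = - act adj w x.
Proof. by rewrite -!scaleN1r actZ. Qed.

Lemma actB w x y : act adj w (x - y) = act adj w x - act adj w y.
Proof. by rewrite actD actN. Qed.

Lemma rform_act w x y : rf (act adj w x) (act adj w y) = rf x y.
Proof. by elim: w => //= i w <-; rewrite rform_refl. Qed.

Lemma act_cat w1 w2 x : act adj (w1 ++ w2) x = act adj w1 (act adj w2 x).
Proof. by rewrite /act foldr_cat. Qed.

Lemma act_revK w x : act adj (rev w) (act adj w x) = x.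
Proof.
elim: w x => //= i w IH x.
by rewrite rev_cons -cats1 act_cat /= refl_invol IH.
Qed.

Lemma act_Krev w x : act adj w (act adj (rev w) x) = x.
Proof. by rewrite -{1}(revK w) act_revK. Qed.

Lemma cc_refl_adj i j x : adj i j -> cc j (refl adj i x) = cc j x + cc i x.
Proof. move=> h; rewrite /cc reflE rformBl rformZl rform_adj //; ring. Qed.

Lemma cc_refl_nadj i j x : i != j -> ~~ adj i j -> cc j (refl adj i x) = cc j x.
Proof. move=> h1 h2; rewrite /cc reflE rformBl rformZl rform_nadj //; ring. Qed.

Lemma ht_refl i x : ht (refl adj i x) = ht x - cc i x.
Proof. by rewrite reflE htB htZ ht_alpha mulr1. Qed.

Lemma cc_alpha_adj i j : adj i j -> cc i (alpha j) = -1.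
Proof.
case: hdiag => _ hs h; rewrite /cc rform_adj //; by rewrite hs.
Qed.

Lemma cc_alpha_same i : cc i (alpha i) = 2.
Proof. exact: rform_aa. Qed.

End Lin.
Definition pos n (x : vec n) := forall k, 0 <= x 0 k.

Section Roots.
Variables (n : nat) (adj : rel 'I_n).
Hypothesis hdiag : diagram adj.
Hypothesis hsph : spherical adj.

Local Notation rf := (rform adj).
Local Notation root := (is_root adj).

Lemma root_act w x : root x -> root (act adj w x).
Proof. by move=> hx; elim: w => //= i w IH; apply: root_refl. Qed.

Lemma root_word x : root x -> exists w j, x = act adj w (alpha j).
Proof.
elim=> [i | i y _ [w [j ->]]]; first by exists [::], i.
by exists (i :: w), j.
Qed.

Lemma root_norm x : root x -> rf x x = 2.
Proof. by elim=> [i | i y _ IH]; rewrite ?rform_aa // rform_refl. Qed.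

Lemma root_sref a b : root a -> root b -> root (a - rf a b *: b).
Proof.
move=> ha hb; case: (root_word hb) => w [j ->].
have -> : a - rf a (act adj w (alpha j)) *: act adj w (alpha j)
   = act adj w (refl adj j (act adj (rev w) a)).
  rewrite reflE actB actZ act_Krev /cc.
  by rewrite -(rform_act hdiag w (act adj (rev w) a)) act_Krev.
by apply: root_act; apply: root_refl; apply: root_act.
Qed.

Lemma root_opp b : root b -> root (- b).
Proof.
move=> hb; have := root_sref hb hb; rewrite root_norm //.
by have -> : b - 2 *: b = - b by rewrite scaler_nat mulr2n opprD addNKr.
Qed.

Lemma roots_fin : exists L : seq (vec n), forall x, root x -> x \in L.
Proof.
case: hsph => ws hws.
exists [seq act adj w (alpha j) | w <- ws, j <- enum 'I_n] => x hx.
case: (root_word hx) => w [j ->]; case: (hws w) => w' hw' ->.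
by apply: allpairs_f => //; rewrite mem_enum.
Qed.

Lemma root_nz x : root x -> x != 0.
Proof.
move=> hx; apply/eqP => e; have := root_norm hx; rewrite e rform0l => h.
by move: h; apply/eqP.
Qed.

Section Bound.
Variables (a b : vec n) (m : int).
Hypotheses (ha : root a) (hb : root b) (hm : rf a b = m) (m2 : 2 <= m).

Fixpoint F (k : nat) : int * int :=
  if k is k'.+1 then let: (p, q) := F k' in (q, m * q - p) else (-1, 0).

Definition xs k := (F k).2 *: a - (F k).1 *: b.

Lemma F_mono k : (F k).1 < (F k).2 /\ 0 <= (F k).2.
Proof.
elim: k => [|k]; first by simpl; lia.
simpl; case: (F k) => p q /= [h1 h2]; nia.
Qed.

Lemma F_step k : (F k.+1).1 = (F k).2 /\ (F k.+1).2 = m * (F k).2 - (F k).1.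
Proof. by simpl; case: (F k). Qed.

Lemma F_lt k l : (k < l)%N -> (F k).1 < (F l).1 /\ (F k).2 < (F l).2.
Proof.
elim: l => // l IH; rewrite ltnS leq_eqVlt => /orP [/eqP -> | /IH [h1 h2]].
  case: (F_step l) => -> ->; case: (F_mono l) => ??; nia.
case: (F_step l) => -> ->; case: (F_mono l) => ??; nia.
Qed.

Lemma xs_root k : [/\ root (xs k), root (xs k.+1) & rf (xs k) (xs k.+1) = m].
Proof.
elim: k => [|k [h1 h2 h3]].
  have e0 : xs 0 = b by apply/rowP=> j; rewrite /xs /= !mxE; ring.
  have e1 : xs 1 = a by apply/rowP=> j; rewrite /xs /= !mxE; ring.
  by rewrite e0 e1 rformC.
have e : xs k.+2 = - (xs k - rf (xs k) (xs k.+1) *: xs k.+1).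
  rewrite h3 /xs.
  have [e1 e2] := F_step k.+1; have [e3 e4] := F_step k.
  rewrite e1 e2 e4 e3.
  by apply/rowP => j; rewrite !mxE; ring.
split.
- exact: h2.
- by rewrite e; apply: root_opp; apply: root_sref.
- rewrite e rformNr rformBr rformZr h3 root_norm // (rformC hdiag (xs k.+1)) h3; ring.
Qed.


Lemma rf_xs k c : rf (xs k) c = (F k).2 * rf a c - (F k).1 * rf b c.
Proof. by rewrite /xs rformBl !rformZl. Qed.

Lemma xs_neq k l : (k < l)%N -> xs k = xs l -> a = b.
Proof.
move=> hkl e.
have [h1 h2] := F_lt hkl.
have ea := congr1 (fun v => rf v a) e; have eb := congr1 (fun v => rf v b) e.
move: ea eb; rewrite /= !rf_xs (root_norm ha) (root_norm hb) (rformC hdiag b a) hm => ea eb.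
have hDE : (F l).1 - (F k).1 = (F l).2 - (F k).2 by nia.
have hv : xs l - xs k = ((F l).2 - (F k).2) *: (a - b).
  have e2 : (F l).1 = (F l).2 - (F k).2 + (F k).1 by lia.
  by apply/rowP => j; rewrite /xs !mxE e2; ring.
move: hv; rewrite e subrr => /esym /eqP; rewrite scalemx_eq0 => /orP [|].
  by move=> /eqP; lia.
by rewrite subr_eq0 => /eqP.
Qed.

Lemma bound_main : a = b.
Proof.
case: (boolP (a == b)) => [/eqP //|/eqP hab]; exfalso.
have [L hL] := roots_fin.
set s := iota 0 (size L).+1.
have hu : uniq (map xs s).
  rewrite map_inj_in_uniq ?iota_uniq // => k l _ _ e.
  case: (ltngtP k l) => // hkl; exfalso; apply: hab.
    exact: xs_neq hkl e.
  exact: xs_neq hkl (esym e).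
have hsub : {subset map xs s <= L}.
  by move=> x /mapP [k _ ->]; apply: hL; case: (xs_root k).
have := uniq_leq_size hu hsub.
by rewrite size_map size_iota ltnn.
Qed.
End Bound.

Lemma bound a b : root a -> root b -> 2 <= rf a b -> a = b.
Proof. by move=> ha hb hm; apply: (bound_main ha hb (erefl _) hm). Qed.

Lemma bound_neg a b : root a -> root b -> rf a b <= -2 -> a = - b.
Proof.
move=> ha hb hm; apply: bound => //; first exact: root_opp.
rewrite rformNr; lia.
Qed.


Lemma alpha_coord (i k : 'I_n) : alpha i 0 k = (i == k)%:R.
Proof. by rewrite /alpha mxE eqxx eq_sym. Qed.

Lemma alpha_inj (i j : 'I_n) : alpha i = alpha j -> i = j.
Proof.
move=> e; have := congr1 (fun v : vec n => v 0 i) e; rewrite /= !alpha_coord eqxx.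
by case: eqP => // _ /eqP; rewrite oner_eq0.
Qed.

Lemma pos_alpha (i : 'I_n) : pos (alpha i).
Proof. by move=> k; rewrite alpha_coord ler0n. Qed.

Lemma cc_le0 i x : pos x -> x 0 i = 0 -> cc adj i x <= 0.
Proof.
move=> hp h0; rewrite /cc rform_alpha_r.
apply: (@le_trans _ _ (\sum_(k < n) (0:int))); last by rewrite big1.
apply: ler_sum => k _; case: (eqVneq k i) => [-> | hk]; first by rewrite h0 mul0r.
apply: mulr_ge0_le0; first exact: hp.
by rewrite mxE (negbTE hk); case: (adj k i).
Qed.

Lemma refl_alpha i : refl adj i (alpha i) = - alpha i.
Proof. by rewrite reflE cc_alpha_same; apply/rowP => k; rewrite !mxE; ring. Qed.

Lemma pos_refl i x : root x -> pos x -> x <> alpha i -> pos (refl adj i x).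
Proof.
move=> hx hp hne.
have hc : cc adj i x <= 1.
  rewrite leNgt; apply/negP => h; apply: hne; apply: (bound hx (root_base adj i)).
  rewrite /cc in h; lia.
have hi : x 0 i = 0 -> cc adj i x <= 0 by apply: cc_le0.
move=> k; rewrite reflE !mxE eqxx /=; case: (eqVneq i k) => [<- | hk].
  have := hp i; rewrite /= mulr1; lia.
by rewrite /= mulr0 subr0; apply: hp.
Qed.

Lemma dichot x : root x -> pos x \/ pos (- x).
Proof.
elim=> [i | i y hy [hp | hn]]; first by left; apply: pos_alpha.
- case: (eqVneq y (alpha i)) => [-> | hne].
    by right; rewrite refl_alpha opprK; apply: pos_alpha.
  by left; apply: pos_refl => //; apply/eqP.
- case: (eqVneq (- y) (alpha i)) => [e | hne].
    left; have -> : y = - alpha i by rewrite -e opprK.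
    by rewrite reflN refl_alpha opprK; apply: pos_alpha.
  right; rewrite -reflN; apply: pos_refl => //; [exact: root_opp | exact/eqP].
Qed.

Lemma ht_pos x : root x -> pos x -> 0 < ht x.
Proof.
move=> hx hp; have hge : 0 <= ht x by apply: sumr_ge0 => k _; apply: hp.
rewrite lt_def hge andbT; apply/negP => /eqP h0.
have hz := psumr_eq0P (fun k _ => hp k) h0.
have : x = 0 by apply/rowP => k; rewrite mxE; apply: hz.
by move/eqP: (root_nz hx).
Qed.

Lemma ht_neg x : root x -> pos (- x) -> ht x < 0.
Proof. by move=> hx hp; have := ht_pos (root_opp hx) hp; rewrite htN oppr_gt0. Qed.

Lemma pos_opp_root x : root x -> pos x -> ~ pos (- x).
Proof. move=> hx hp hn; have := ht_pos hx hp; have := ht_neg hx hn; lia. Qed.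

Lemma ht_ne a b : root a -> root b -> a <> b -> rf a b = 1 -> ht a <> ht b.
Proof.
move=> ha hb hab h1 e.
have hr : root (a - b) by have := root_sref ha hb; rewrite h1 scale1r.
have hnz : a - b <> 0 by move/eqP; rewrite subr_eq0 => /eqP.
have h0 : ht (a - b) = 0 by rewrite htB e subrr.
case: (dichot hr) => [hp | hn].
  by have := ht_pos hr hp; rewrite h0 ltxx.
by have := ht_neg hr hn; rewrite h0 ltxx.
Qed.

Lemma cc_range i b : root b -> pos b -> b <> alpha i -> -1 <= cc adj i b <= 1.
Proof.
move=> hb hp hne; apply/andP; split.
  rewrite leNgt; apply/negP => h.
  have e : b = - alpha i by apply: (bound_neg hb (root_base adj i)); rewrite /cc in h; lia.
  apply: (pos_opp_root (root_base adj i) (pos_alpha i)); by rewrite -e.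
rewrite leNgt; apply/negP => h; apply: hne; apply: (bound hb (root_base adj i)).
rewrite /cc in h; lia.
Qed.

Definition a2 (i j : 'I_n) := alpha i + alpha j.

Lemma a2_refl i j : adj i j -> a2 i j = refl adj j (alpha i).
Proof.
move=> h; rewrite reflE /cc rform_adj //.
by apply/rowP => k; rewrite /a2 !mxE; ring.
Qed.

Lemma root_a2 i j : adj i j -> root (a2 i j).
Proof. by move=> h; rewrite a2_refl //; apply: root_refl; apply: root_base. Qed.

Lemma pos_a2 (i j : 'I_n) : pos (a2 i j).
Proof. by move=> k; rewrite /a2 mxE; apply: addr_ge0; apply: pos_alpha. Qed.

Lemma cc2_range i j b : adj i j -> root b -> pos b -> b <> a2 i j ->
  -1 <= cc adj i b + cc adj j b <= 1.
Proof.
move=> hij hb hp hne.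
have e : rf b (a2 i j) = cc adj i b + cc adj j b by rewrite /a2 rformDr.
apply/andP; split.
  rewrite leNgt; apply/negP => h.
  have e2 : b = - a2 i j by apply: (bound_neg hb (root_a2 hij)); rewrite e; lia.
  apply: (pos_opp_root (root_a2 hij) (pos_a2 i j)); by rewrite -e2.
rewrite leNgt; apply/negP => h; apply: hne; apply: (bound hb (root_a2 hij)).
rewrite e; lia.
Qed.

Definition posb (x : vec n) : bool := [forall k, 0 <= x 0 k].
Definition absv (x : vec n) := if posb x then x else - x.
Local Notation cc := (cc adj).

Definition rootset (B : set (vec n)) := forall b, B b -> root b.

Lemma posbP (x : vec n) : reflect (pos x) (posb x).
Proof. exact: forallP. Qed.

Lemma absv_cases (x : vec n) : absv x = x \/ absv x = - x.
Proof. by rewrite /absv; case: posb; [left|right]. Qed.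

Lemma absv_pos (x : vec n) : pos x -> absv x = x.
Proof. by move=> /posbP h; rewrite /absv h. Qed.

Lemma absv_root x : root x -> is_pos_root adj (absv x).
Proof.
move=> hx; rewrite /absv; case: (posbP x) => [hp | hn].
  by split.
split; first exact: root_opp.
by case: (dichot hx).
Qed.

Lemma absv_N x : root x -> absv (- x) = absv x.
Proof.
move=> hx; rewrite /absv; case: (posbP x) => [hp | hn].
  case: (posbP (- x)) => [hn | _]; last by rewrite opprK.
  by case: (pos_opp_root hx hp hn).
case: (posbP (- x)) => // hn'; by case: (dichot hx).
Qed.

Lemma wimgE w B x : rootset B ->
  (wimg adj w B x <-> exists2 b, B b & x = absv (act adj w b)).
Proof.
move=> hB; split.
  move=> [[hr hp] [b hb [e | e]]]; exists b => //.
    by rewrite -e absv_pos.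
  have -> : act adj w b = - x by rewrite e opprK.
  by rewrite absv_N // absv_pos.
move=> [b hb ->]; split; first by apply: absv_root; apply: root_act; apply: hB.
exists b => //; case: (absv_cases (act adj w b)) => ->; by [left|right].
Qed.

Lemma funeqP (B C : set (vec n)) : (forall x, B x <-> C x) -> B = C.
Proof. by move=> h; apply: funext => x; apply: propext. Qed.

Lemma wimg_ext w w' B : (forall x, act adj w x = act adj w' x) ->
  wimg adj w B = wimg adj w' B.
Proof.
move=> h; apply: funeqP => x; rewrite /wimg; split; move=> [hp [b hb e]];
  split => //; exists b => //; by rewrite h in e * || rewrite -h in e *.
Qed.

Lemma absv_refl_absv i v : root v -> absv (refl adj i (absv v)) = absv (refl adj i v).
Proof.
move=> hv; case: (absv_cases v) => ->; rewrite ?reflN ?absv_N //.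
by apply: root_refl.
Qed.

Lemma wimg_cons i w B : rootset B ->
  wimg adj [:: i] (wimg adj w B) = wimg adj (i :: w) B.
Proof.
move=> hB; have hB' : rootset (wimg adj w B) by move=> b [[]].
apply: funeqP => x; rewrite (wimgE _ _ hB') (wimgE _ _ hB); split.
  move=> [y /(wimgE _ _ hB) [b hb ->] ->]; exists b => //=.
  by rewrite absv_refl_absv //; apply: root_act; apply: hB.
move=> [b hb ->]; exists (absv (act adj w b)).
  by apply/(wimgE _ _ hB); exists b.
by rewrite /= absv_refl_absv //; apply: root_act; apply: hB.
Qed.

Lemma refl_comm i j x : i != j -> ~~ adj i j ->
  refl adj i (refl adj j x) = refl adj j (refl adj i x).
Proof.
move=> h1 h2.
have h2' : ~~ adj j i by case: hdiag => _ hs; rewrite hs.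
rewrite (reflE _ i (refl adj j x)) (reflE _ j (refl adj i x)).
rewrite (cc_refl_nadj (adj:=adj) (i:=j) (j:=i)) 1?eq_sym //.
rewrite (cc_refl_nadj (adj:=adj) (i:=i) (j:=j)) //.
by rewrite !reflE; apply/rowP => k; rewrite !mxE; ring.
Qed.

Lemma refl3 i j x : adj i j ->
  refl adj i (refl adj j (refl adj i x)) = x - (cc i x + cc j x) *: (alpha i + alpha j).
Proof.
move=> h; have h' : adj j i by case: hdiag => _ hs; rewrite hs.
rewrite (reflE _ i (refl adj j (refl adj i x))).
rewrite (cc_refl_adj hdiag _ h') cc_refl_same (cc_refl_adj hdiag _ h).
rewrite (reflE _ j (refl adj i x)) (cc_refl_adj hdiag _ h) !reflE.
by apply/rowP => k; rewrite !mxE; ring.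
Qed.

Lemma refl_braid i j x : adj i j ->
  refl adj i (refl adj j (refl adj i x)) = refl adj j (refl adj i (refl adj j x)).
Proof.
move=> h; have h' : adj j i by case: hdiag => _ hs; rewrite hs.
by rewrite refl3 // refl3 // (addrC (cc i x)) (addrC (alpha i)).
Qed.


Variable calB : set (set (vec n)).
Hypothesis hW : W_orbit adj calB.

Definition R i (B : set (vec n)) := wimg adj [:: i] B.

Definition prs (B : set (vec n)) := forall b, B b -> root b /\ pos b.

Lemma prs_rootset B : prs B -> rootset B.
Proof. by move=> h b /h []. Qed.

Lemma wimg_nil B : prs B -> wimg adj [::] B = B.
Proof.
move=> hB; apply: funeqP => x; rewrite (wimgE _ _ (prs_rootset hB)) /=; split.
  by move=> [b hb ->]; rewrite absv_pos //; case: (hB b hb).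
by move=> hx; exists x => //; rewrite absv_pos //; case: (hB x hx).
Qed.

Lemma wimg_prs w B : prs (wimg adj w B).
Proof. by move=> b [[hr hp] _]. Qed.

Lemma R_prs i B : prs (R i B).
Proof. exact: wimg_prs. Qed.

Lemma calB_prs B : calB B -> prs B.
Proof. by case: hW => B0 _ hiff /hiff [w ->]; apply: wimg_prs. Qed.

Lemma calB_R i B : calB B -> calB (R i B).
Proof.
case: hW => B0 [hB0 _] hiff /hiff [w ->]; apply/hiff; exists (i :: w).
by rewrite /R wimg_cons //; move=> b /hB0 [].
Qed.

Lemma calB_orth B : calB B -> forall b c, B b -> B c -> b <> c -> rf b c = 0.
Proof.
case: hW => B0 [hB0 horth] hiff /hiff [w ->].
have hr : rootset B0 by move=> b /hB0 [].
move=> b c /(wimgE _ _ hr) [b0 hb0 ->] /(wimgE _ _ hr) [c0 hc0 ->] hne.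
have hne0 : b0 <> c0 by move=> e; apply: hne; rewrite e.
have e0 : rf (act adj w b0) (act adj w c0) = 0 by rewrite rform_act // horth.
by case: (absv_cases (act adj w b0)) => ->; case: (absv_cases (act adj w c0)) => ->;
  rewrite ?rformNl ?rformNr e0 ?oppr0.
Qed.

Lemma R2 i j B : prs B -> wimg adj [:: i; j] B = R i (R j B).
Proof. by move=> hB; rewrite /R wimg_cons //; apply: prs_rootset. Qed.

Lemma R3 i j k B : prs B -> wimg adj [:: i; j; k] B = R i (R j (R k B)).
Proof.
move=> hB; rewrite -(wimg_cons i [:: j; k]); last exact: prs_rootset.
by rewrite R2.
Qed.

Lemma R_R i B : prs B -> R i (R i B) = B.
Proof.
move=> hB; rewrite -R2 // (@wimg_ext _ [::]) ?wimg_nil // => x /=.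
by rewrite refl_invol.
Qed.

Lemma R_comm i j B : i != j -> ~~ adj i j -> prs B -> R i (R j B) = R j (R i B).
Proof.
move=> h1 h2 hB; rewrite -!R2 //; apply: wimg_ext => x /=; exact: refl_comm.
Qed.

Lemma R_braid i j B : adj i j -> prs B -> R i (R j (R i B)) = R j (R i (R j B)).
Proof.
move=> h hB; rewrite -!R3 //; apply: wimg_ext => x /=; exact: refl_braid.
Qed.

Lemma R_elem i B x : prs B -> ~ B (alpha i) ->
  (R i B x <-> exists2 b, B b & x = refl adj i b).
Proof.
move=> hB hn; rewrite /R (wimgE _ _ (prs_rootset hB)) /=; split.
  move=> [b hb ->]; exists b => //; rewrite absv_pos //.
  case: (hB b hb) => hr hp; apply: pos_refl => // e; apply: hn; by rewrite -e.
move=> [b hb ->]; exists b => //; rewrite absv_pos //.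
case: (hB b hb) => hr hp; apply: pos_refl => // e; apply: hn; by rewrite -e.
Qed.

Lemma R_fix i B : calB B -> B (alpha i) -> R i B = B.
Proof.
move=> hc ha; have hB := calB_prs hc.
apply: funeqP => x; rewrite /R (wimgE _ _ (prs_rootset hB)) /=; split.
  move=> [b hb ->]; case: (eqVneq b (alpha i)) => [-> | hne].
    by rewrite refl_alpha absv_N ?absv_pos //; [apply: pos_alpha | apply: root_base].
  have e : cc i b = 0 by rewrite /cc; apply: (calB_orth hc) => //; apply/eqP.
  by rewrite reflE e scale0r subr0 absv_pos //; case: (hB b hb).
move=> hx; exists x => //; case: (eqVneq x (alpha i)) => [-> | hne].
  by rewrite refl_alpha absv_N ?absv_pos //; [apply: pos_alpha | apply: root_base].
have e : cc i x = 0 by rewrite /cc; apply: (calB_orth hc) => //; apply/eqP.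
by rewrite reflE e scale0r subr0 absv_pos //; case: (hB x hx).
Qed.

Lemma R_fix0 i B : prs B -> (forall b, B b -> cc i b = 0) -> R i B = B.
Proof.
move=> hB h0.
have hn : ~ B (alpha i) by move=> /h0; rewrite cc_alpha_same.
apply: funeqP => x; rewrite (R_elem _ hB hn); split.
  by move=> [b hb ->]; rewrite reflE h0 // scale0r subr0.
by move=> hx; exists x => //; rewrite reflE h0 // scale0r subr0.
Qed.

Lemma cc_rangeB i B b : prs B -> ~ B (alpha i) -> B b -> -1 <= cc i b <= 1.
Proof.
move=> hB hn hb; case: (hB b hb) => hr hp; apply: cc_range => // e.
by apply: hn; rewrite -e.
Qed.
Lemma fin_max (P : vec n -> Prop) (f : vec n -> int) (L : seq (vec n)) :
  (forall x, P x -> x \in L) -> (exists x, P x) ->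
  exists2 x, P x & forall y, P y -> f y <= f x.
Proof.
elim: L P => [|a L IH] P hL hex.
  by case: hex => x /hL.
pose P' x := P x /\ x <> a.
have hL' : forall x, P' x -> x \in L.
  move=> x [hx hne]; move: (hL x hx); rewrite inE => /orP [/eqP // | //].
case: (pselect (exists x, P' x)) => [hex' | hno].
  case: (IH P' hL' hex') => m [hm hma] hmax.
  case: (pselect (P a)) => [ha | hna].
    case: (lerP (f m) (f a)) => hfa.
      exists a => // y hy; case: (pselect (y = a)) => [-> // | hya].
      by apply: le_trans hfa; apply: hmax.
    exists m => // y hy; case: (pselect (y = a)) => [-> | hya].
      exact: ltW.
    by apply: hmax.
  exists m => // y hy; apply: hmax; split => // e; apply: hna; by rewrite -e.
case: hex => x hx.
have hxa : x = a by case: (pselect (x = a)) => // hne; case: hno; exists x.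
exists a; first by rewrite -hxa.
move=> y hy; have -> : y = a by case: (pselect (y = a)) => // hne; case: hno; exists y.
by [].
Qed.

Definition ltB (B C : set (vec n)) := exists h : int,
  [/\ (forall y, h < ht y -> (B y <-> C y)),
      (exists x, [/\ ht x = h, C x & ~ B x]) &
      (forall x, ht x = h -> B x -> C x)].

Lemma ltB_irr B : ~ ltB B B.
Proof. by move=> [h [_ [x [_ hx hnx]] _]]. Qed.

Lemma ltB_trans A B C : ltB A B -> ltB B C -> ltB A C.
Proof.
move=> [h1 [a1 [x1 [hx1 Bx1 nAx1]] a3]] [h2 [b1 [x2 [hx2 Cx2 nBx2]] b3]].
case: (ltgtP h1 h2) => hh.
- exists h2; split.
  + move=> y hy; rewrite a1; [exact: b1 | exact: lt_trans hh hy].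
  + exists x2; split => // hA; apply: nBx2; apply/(a1 x2) => //; by rewrite hx2.
  + move=> x hx hA; apply: b3 => //; apply/(a1 x) => //; by rewrite hx.
- exists h1; split.
  + move=> y hy; rewrite a1 //; apply: b1; exact: lt_trans hh hy.
  + exists x1; split => //; apply/(b1 x1) => //; by rewrite hx1.
  + move=> x hx hA; apply/(b1 x); [by rewrite hx | exact: a3].
- rewrite -hh in b1 b3 hx2; exists h1; split.
  + move=> y hy; rewrite a1 //; exact: b1 y hy.
  + exists x2; split => // hA; apply: nBx2; exact: a3 x2 hx2 hA.
  + move=> x hx hA; apply: b3 => //; exact: a3 x hx hA.
Qed.

Definition Desc i (B : set (vec n)) := exists2 b1, B b1 &
  [/\ cc i b1 = 1, (forall b, B b -> cc i b = 1 -> ht b <= ht b1) &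
      (forall b, B b -> cc i b = -1 -> ht b + 1 < ht b1)].

Definition Asc i (B : set (vec n)) := exists2 b2, B b2 &
  [/\ cc i b2 = -1, (forall b, B b -> cc i b = -1 -> ht b <= ht b2) &
      (forall b, B b -> cc i b = 1 -> ht b <= ht b2)].

Lemma cc_ne_alpha i B b : calB B -> B b -> (cc i b = 1 \/ cc i b = -1) -> ~ B (alpha i).
Proof.
move=> hc hb h ha; case: (eqVneq b (alpha i)) => [e | hne].
  by move: h; rewrite e cc_alpha_same; lia.
have := calB_orth hc hb ha; rewrite -/(cc i b) => e; move: h; rewrite e //; [lia | exact/eqP].
Qed.

Lemma Desc_na i B : calB B -> Desc i B -> ~ B (alpha i).
Proof. by move=> hc [b1 hb1 [h _ _]]; apply: (cc_ne_alpha hc hb1); left. Qed.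

Lemma Asc_na i B : calB B -> Asc i B -> ~ B (alpha i).
Proof. by move=> hc [b1 hb1 [h _ _]]; apply: (cc_ne_alpha hc hb1); right. Qed.

Lemma R_cases i B y : calB B -> ~ B (alpha i) -> R i B y ->
  exists2 b, B b & [/\ y = refl adj i b, ht y = ht b - cc i b & -1 <= cc i b <= 1].
Proof.
move=> hc hn /(R_elem _ (calB_prs hc) hn) [b hb ->]; exists b => //; split => //.
  exact: ht_refl.
exact: (cc_rangeB (calB_prs hc) hn hb).
Qed.

Lemma refl0 i b : cc i b = 0 -> refl adj i b = b.
Proof. by move=> h; rewrite reflE h scale0r subr0. Qed.

Lemma in_R0 i B b : calB B -> ~ B (alpha i) -> B b -> cc i b = 0 -> R i B b.
Proof.
move=> hc hn hb h0; apply/(R_elem _ (calB_prs hc) hn); exists b => //.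
by rewrite refl0.
Qed.

Lemma orth_refl i B b : calB B -> ~ B (alpha i) -> B b -> cc i b <> 0 -> ~ B (refl adj i b).
Proof.
move=> hc hn hb hnz hr.
have hcr := cc_rangeB (calB_prs hc) hn hb.
have hne : b <> refl adj i b.
  move=> e; have := cc_refl_same adj i b; rewrite -e; lia.
have := calB_orth hc hb hr hne.
rewrite reflE rformBr rformZr root_norm; last by case: (calB_prs hc hb).
rewrite -/(cc i b); nia.
Qed.

Lemma not_in_R i B b : calB B -> ~ B (alpha i) -> B b -> cc i b <> 0 -> ~ R i B b.
Proof.
move=> hc hn hb hnz /(R_elem _ (calB_prs hc) hn) [b' hb' e].
have hnz' : cc i b' <> 0 by move=> h0; apply: hnz; rewrite e cc_refl_same h0 oppr0.
apply: (orth_refl hc hn hb' hnz'); by rewrite -e.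
Qed.

Lemma cc3 (c : int) : -1 <= c <= 1 -> c = 0 \/ c = 1 \/ c = -1.
Proof. lia. Qed.

Lemma D1 i B : calB B -> Desc i B -> ltB (R i B) B.
Proof.
move=> hc hD; have hn := Desc_na hc hD; case: hD => b1 hb1 [c1 hmax hlow].
exists (ht b1); split.
- move=> y hy; split.
  + move=> /(R_cases hc hn) [b hb [ey hty hcr]].
    case: (eqVneq (cc i b) 0) => [h0 | hnz]; first by rewrite ey refl0.
    exfalso; have := hmax b hb; have := hlow b hb; move: hnz => /eqP hnz; lia.
  + move=> hy'; case: (eqVneq (cc i y) 0) => [h0 | hnz]; first exact: in_R0.
    exfalso; have := hmax y hy'; have := hlow y hy'.
    have := cc_rangeB (calB_prs hc) hn hy'; move: hnz => /eqP hnz; lia.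
- exists b1; split => //; apply: not_in_R => //; lia.
- move=> x hx /(R_cases hc hn) [b hb [ey hty hcr]].
  case: (eqVneq (cc i b) 0) => [h0 | hnz]; first by rewrite ey refl0.
  exfalso; have := hmax b hb; have := hlow b hb; move: hnz => /eqP hnz; lia.
Qed.

Lemma D2 i B : calB B -> Asc i B -> ltB B (R i B).
Proof.
move=> hc hD; have hn := Asc_na hc hD; case: hD => b2 hb2 [c2 hmax hle].
exists (ht b2 + 1); split.
- move=> y hy; split.
  + move=> hy'; case: (eqVneq (cc i y) 0) => [h0 | hnz]; first exact: in_R0.
    exfalso; have := hmax y hy'; have := hle y hy'.
    have := cc_rangeB (calB_prs hc) hn hy'; move: hnz => /eqP hnz; lia.
  + move=> /(R_cases hc hn) [b hb [ey hty hcr]].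
    case: (eqVneq (cc i b) 0) => [h0 | hnz]; first by rewrite ey refl0.
    exfalso; have := hmax b hb; have := hle b hb; move: hnz => /eqP hnz; lia.
- exists (refl adj i b2); split.
  + by rewrite ht_refl c2; lia.
  + by apply/(R_elem _ (calB_prs hc) hn); exists b2.
  + by apply: orth_refl => //; lia.
- move=> x hx hx'; case: (eqVneq (cc i x) 0) => [h0 | hnz]; first exact: in_R0.
  exfalso; have := hmax x hx'; have := hle x hx'.
  have := cc_rangeB (calB_prs hc) hn hx'; move: hnz => /eqP hnz; lia.
Qed.

Lemma nontie i B b1 b2 : calB B -> B b1 -> B b2 -> cc i b1 = 1 -> cc i b2 = -1 ->
  ht b1 <> ht b2 + 1.
Proof.
move=> hc hb1 hb2 c1 c2 e.
have hne : b1 <> b2 by move=> e'; move: c1; rewrite e' c2; lia.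
have [hr1 _] := calB_prs hc hb1; have [hr2 _] := calB_prs hc hb2.
have o := calB_orth hc hb1 hb2 hne.
set g := refl adj i b2.
have hg : root g by apply: root_refl.
have e1 : rf b1 g = 1.
  by rewrite /g reflE rformBr rformZr o -/(cc i b1) c1 c2; lia.
have hne' : b1 <> g by move=> e'; move: e1; rewrite -e' root_norm //; lia.
apply: (ht_ne hr1 hg hne' e1); by rewrite /g ht_refl c2 e; lia.
Qed.

Lemma D3 i B : calB B -> R i B <> B -> Desc i B \/ Asc i B.
Proof.
move=> hc hne.
have hn : ~ B (alpha i) by move=> ha; apply: hne; apply: R_fix.
have hex : exists b, B b /\ cc i b <> 0.
  case: (pselect (exists b, B b /\ cc i b <> 0)) => // hno; exfalso; apply: hne.
  apply: R_fix0; first exact: calB_prs.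
  move=> b hb; case: (pselect (cc i b = 0)) => // h; case: hno; by exists b.
have [L hL] := roots_fin.
pose f b := if cc i b == 1 then ht b else ht b + 1.
have [m [hm hmz] hmax] : exists2 m, B m /\ cc i m <> 0 &
    forall y, B y /\ cc i y <> 0 -> f y <= f m.
  apply: fin_max hex => x [hx _]; apply: hL; by case: (calB_prs hc hx).
have hcr := cc_rangeB (calB_prs hc) hn hm.
have hcb : forall b, B b -> -1 <= cc i b <= 1 := fun b => cc_rangeB (calB_prs hc) hn.
case: (cc3 hcr) => [// | [h1 | h1]].
- left; exists m => //; split => //.
  + move=> b hb cb; have hb' : B b /\ cc i b <> 0 by split => //; lia.
    have := hmax b hb'.
    by rewrite /f cb h1 eqxx.
  + move=> b hb cb; have hb' : B b /\ cc i b <> 0 by split => //; lia.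
    have := hmax b hb'.
    rewrite /f cb h1 eqxx /=. have := nontie hc hm hb h1 cb; lia.
- right; exists m => //; split => //.
  + move=> b hb cb; have hb' : B b /\ cc i b <> 0 by split => //; lia.
    have := hmax b hb'.
    rewrite /f cb h1 /=; lia.
  + move=> b hb cb; have hb' : B b /\ cc i b <> 0 by split => //; lia.
    have := hmax b hb'.
    rewrite /f cb h1 eqxx /=. have := nontie hc hb hm cb h1; lia.
Qed.

Lemma lt_Desc i B : calB B -> ltB (R i B) B -> Desc i B.
Proof.
move=> hc hl; have hne : R i B <> B by move=> e; move: hl; rewrite e; apply: ltB_irr.
case: (D3 hc hne) => // /(D2 hc) h'; exfalso.
exact: ltB_irr (ltB_trans hl h').
Qed.

Lemma lt_Asc i B : calB B -> ltB B (R i B) -> Asc i B.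
Proof.
move=> hc hl; have hne : R i B <> B by move=> e; move: hl; rewrite e; apply: ltB_irr.
case: (D3 hc hne) => // /(D1 hc) h'; exfalso.
exact: ltB_irr (ltB_trans hl h').
Qed.

Lemma notAsc_lt i B : calB B -> R i B <> B -> ~ Asc i B -> ltB (R i B) B.
Proof. by move=> hc hne hna; case: (D3 hc hne) => // /(D1 hc). Qed.
Lemma rf_refl_r d k y : rf d (refl adj k y) = rf d y - cc k y * cc k d.
Proof. by rewrite reflE rformBr rformZr. Qed.

Lemma L_ij B i j d b : calB B -> B d -> B b -> d <> b ->
  cc i (refl adj j b) = -1 ->
  - cc j b * cc j d + cc i d = 1 -> ht b - cc j b + 1 = ht d -> False.
Proof.
move=> hc hd hb hne c1 e1 e2.
have [hrd _] := calB_prs hc hd; have [hrb _] := calB_prs hc hb.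
set g := refl adj i (refl adj j b).
have hg : root g by apply: root_refl; apply: root_refl.
have o := calB_orth hc hd hb hne.
have eg : rf d g = 1 by rewrite /g rf_refl_r rf_refl_r o c1; lia.
have hne' : d <> g by move=> e; move: eg; rewrite -e root_norm //; lia.
apply: (ht_ne hrd hg hne' eg); rewrite /g ht_refl ht_refl c1; lia.
Qed.

Lemma adj_sym i j : adj i j -> adj j i.
Proof. by case: hdiag => _ hs; rewrite hs. Qed.

Lemma R_memb i B b : calB B -> ~ B (alpha i) -> B b -> R i B (refl adj i b).
Proof. by move=> hc hn hb; apply/(R_elem _ (calB_prs hc) hn); exists b. Qed.

Lemma notR_alpha i j B : adj i j -> calB B -> ~ B (alpha j) -> ~ B (a2 i j) ->
  ~ (R j B) (alpha i).
Proof.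
move=> h hc hn ha /(R_elem _ (calB_prs hc) hn) [b hb e]; apply: ha.
by rewrite a2_refl // e refl_invol.
Qed.

Lemma refl_a2 i j : adj i j -> refl adj j (a2 i j) = alpha i.
Proof. by move=> h; rewrite a2_refl // refl_invol. Qed.

Lemma Ylem i j B : calB B -> adj i j -> Desc i B -> Desc j B -> ~ B (a2 i j) ->
  R i (R j B) <> R j B -> ltB (R i (R j B)) (R j B).
Proof.
move=> hc hij hDi hDj ha hfix.
have hni := Desc_na hc hDi; have hnj := Desc_na hc hDj.
have hji := adj_sym hij.
apply: notAsc_lt => //; first exact: calB_R.
move=> [x2 hx2 [c2 hmax2 hle2]].
case: (R_cases hc hnj hx2) => b2 hb2 [ex2 hht2 hcr2].
case: hDi => b1 hb1 [ci1 hmax1 hlow1].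
case: hDj => d1 hd1 [cj1 hmaxd hlowd].
have hP := calB_prs hc.
have rng : forall b, B b -> -1 <= cc i b <= 1 /\ -1 <= cc j b <= 1.
  by move=> b hb; split; [apply: (cc_rangeB hP hni hb) | apply: (cc_rangeB hP hnj hb)].
have srng : forall b, B b -> -1 <= cc i b + cc j b <= 1.
  move=> b hb; case: (hP b hb) => hr hp; apply: cc2_range => // e; apply: ha; by rewrite -e.
have cx : forall b, cc i (refl adj j b) = cc i b + cc j b.
  by move=> b; rewrite (cc_refl_adj hdiag _ hji).
have A1 := hle2 _ (R_memb hc hnj hb1); rewrite cx ht_refl in A1.
have A2 := hle2 _ (R_memb hc hnj hd1); rewrite cx ht_refl in A2.
rewrite ex2 cx in c2; rewrite ex2 ht_refl in A1 A2.
have L1 : ht b2 + 2 = ht d1 -> cc i d1 = 0 -> cc i b2 = 0 -> cc j b2 = -1 -> False.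
  move=> e1 e2 e3 e4.
  have hne : d1 <> b2 by move=> e; move: cj1; rewrite e e4; lia.
  apply: (L_ij (i:=i) (j:=j) hc hd1 hb2 hne); rewrite ?cx; lia.
have := hmax1 _ hd1; have := hlow1 _ hd1; have := hmax1 _ hb2; have := hlow1 _ hb2.
have := hmaxd _ hb1; have := hlowd _ hb1; have := hmaxd _ hb2; have := hlowd _ hb2.
have := rng _ hb1; have := rng _ hd1; have := rng _ hb2.
have := srng _ hb1; have := srng _ hd1; have := srng _ hb2.
move: A1 A2 L1 c2 ci1 cj1; lia.
Qed.

Lemma Zlem i j B : calB B -> adj i j -> Desc i B -> ~ B (alpha j) -> ~ B (a2 i j) ->
  R j (R i (R j B)) <> R i (R j B) -> ltB (R j (R i (R j B))) (R i (R j B)).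
Proof.
move=> hc hij hDi hnj ha hfix.
have hni := Desc_na hc hDi; have hji := adj_sym hij.
have hnRi := notR_alpha hij hc hnj ha.
have hc1 := calB_R j hc.
apply: notAsc_lt => //; first by apply: calB_R.
move=> [x2 hx2 [c2 hmax2 hle2]].
case: (R_cases hc1 hnRi hx2) => y2 hy2 [ex2 _ _].
case: (R_cases hc hnj hy2) => b2 hb2 [ey2 _ _].
case: hDi => b1 hb1 [ci1 hmax1 hlow1].
have hP := calB_prs hc.
have rng : forall b, B b -> -1 <= cc i b <= 1 /\ -1 <= cc j b <= 1.
  by move=> b hb; split; [apply: (cc_rangeB hP hni hb) | apply: (cc_rangeB hP hnj hb)].
have srng : forall b, B b -> -1 <= cc i b + cc j b <= 1.
  move=> b hb; case: (hP b hb) => hr hp; apply: cc2_range => // e; apply: ha; by rewrite -e.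
have cxi : forall b, cc i (refl adj j b) = cc i b + cc j b.
  by move=> b; rewrite (cc_refl_adj hdiag _ hji).
have cxj : forall y, cc j (refl adj i y) = cc j y + cc i y.
  by move=> y; rewrite (cc_refl_adj hdiag _ hij).
have A1 := hle2 _ (R_memb hc1 hnRi (R_memb hc hnj hb1)).
rewrite ex2 ey2 in A1. rewrite !cxj !cc_refl_same !ht_refl !cxi in A1.
rewrite ex2 ey2 in c2. rewrite !cxj !cc_refl_same !cxi in c2.
have L1 : ht b2 + 2 = ht b1 -> cc j b1 = 0 -> cc j b2 = 0 -> cc i b2 = -1 -> False.
  move=> e1 e2 e3 e4.
  have hne : b1 <> b2 by move=> e; move: ci1; rewrite e e4; lia.
  apply: (L_ij (i:=j) (j:=i) hc hb1 hb2 hne); rewrite ?cxj; lia.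
have := hlow1 _ hb2; have := hmax1 _ hb2.
have := rng _ hb1; have := rng _ hb2; have := srng _ hb1; have := srng _ hb2.
move: A1 L1 c2 ci1; lia.
Qed.

Lemma part_ii i j B : calB B -> adj i j -> (forall b, B b -> rform adj (alpha i) b = 0) ->
  (ltB (R j B) B -> ltB (R i (R j B)) (R j B)) /\
  (ltB B (R j B) -> ltB (R j B) (R i (R j B))).
Proof.
move=> hc hij h0'.
have h0 : forall b, B b -> cc i b = 0 by move=> b hb; rewrite /cc rformC // h0'.
have hP := calB_prs hc; have hji := adj_sym hij.
have hRi : R i B = B := R_fix0 hP h0.
have cxi : forall b, cc i (refl adj j b) = cc i b + cc j b.
  by move=> b; rewrite (cc_refl_adj hdiag _ hji).
split.
- move=> hl; have hD := lt_Desc hc hl; have hnj := Desc_na hc hD.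
  have hfix : R i (R j B) <> R j B.
    move=> e; have e2 : R j (R i (R j B)) = B by rewrite e R_R.
    rewrite -R_braid // hRi in e2.
    have e3 : R j B = B by rewrite -e e2.
    by move: hl; rewrite e3; apply: ltB_irr.
  apply: notAsc_lt => //; first exact: calB_R.
  move=> [x2 hx2 [c2 hmax2 hle2]].
  case: (R_cases hc hnj hx2) => b2 hb2 [ex2 _ hcr2].
  case: hD => b1 hb1 [cj1 hmax1 hlow1].
  have A1 := hle2 _ (R_memb hc hnj hb1).
  have hb10 := h0 _ hb1; have hb20 := h0 _ hb2.
  rewrite ex2 in A1 c2; rewrite !ht_refl ?cxi ?hb10 ?hb20 in A1; rewrite ?cxi ?hb20 in c2.
  have L1 : ht b2 + 2 = ht b1 -> cc j b2 = -1 -> False.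
    move=> e1 e2.
    have hne : b1 <> b2 by move=> e; move: cj1; rewrite e e2; lia.
    apply: (L_ij (i:=i) (j:=j) hc hb1 hb2 hne); rewrite ?cxi ?h0 //; lia.
  have := hlow1 _ hb2; move: A1 L1 c2 cj1 hcr2; lia.
- move=> hl; have hA := lt_Asc hc hl; have hnj := Asc_na hc hA.
  apply: D2; first exact: calB_R.
  case: hA => b2 hb2 [c2 hmax hle].
  exists (refl adj j b2); first exact: R_memb.
  split.
  + by rewrite cxi h0 // c2.
  + move=> b /(R_cases hc hnj) [b' hb' [-> hhb _]]; rewrite cxi h0 // !ht_refl c2.
    have := hmax _ hb'; lia.
  + move=> b /(R_cases hc hnj) [b' hb' [-> hhb _]]; rewrite cxi h0 // !ht_refl c2.
    have := hle _ hb'; lia.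
Qed.

Lemma part_iv i j B : calB B -> adj i j -> ltB (R i B) B -> ltB (R j B) B ->
  R i (R j B) = R j B \/
  [/\ ltB (R i (R j B)) (R j B), ltB (R j (R i B)) (R i B),
      ltB (R i (R j (R i B))) (R i (R j B)) & ltB (R i (R j (R i B))) (R j (R i B))].
Proof.
move=> hc hij hli hlj.
have hDi := lt_Desc hc hli; have hDj := lt_Desc hc hlj.
have hni := Desc_na hc hDi; have hnj := Desc_na hc hDj.
have hP := calB_prs hc; have hji := adj_sym hij.
have irr_i : R i B <> B by move=> e; move: hli; rewrite e; apply: ltB_irr.
have irr_j : R j B <> B by move=> e; move: hlj; rewrite e; apply: ltB_irr.
case: (pselect (R i (R j B) = R j B)) => [e | hne]; [by left | right].
have ha : ~ B (a2 i j).
  move=> h; apply: hne; apply: R_fix; first exact: calB_R.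
  rewrite -(refl_a2 hij); exact: R_memb.
have ha' : ~ B (a2 j i) by rewrite /a2 addrC.
have hne2 : R j (R i B) <> R i B.
  move=> e; have e2 : R i (R j (R i B)) = B by rewrite e R_R.
  rewrite R_braid // in e2; apply: hne.
  have e3 := congr1 (R j) e2; rewrite R_R // in e3; apply: R_prs.
split.
- exact: Ylem.
- exact: Ylem.
- rewrite R_braid //; apply: Zlem => //.
  move=> e; rewrite -R_braid // in e.
  have e2 := congr1 (R i) e; rewrite !(R_R _ (@R_prs _ _)) in e2.
  have e3 := congr1 (R j) e2; rewrite !(R_R _ (@R_prs _ _)) (R_R _ hP) in e3.
  exact: irr_i e3.
- apply: Zlem => //.
  move=> e; rewrite R_braid // in e.
  have e2 := congr1 (R j) e; rewrite !(R_R _ (@R_prs _ _)) in e2.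
  have e3 := congr1 (R i) e2; rewrite !(R_R _ (@R_prs _ _)) (R_R _ hP) in e3.
  exact: irr_j e3.
Qed.

Hypothesis hadm : admissible adj calB.

Lemma part_iii i j B : calB B -> i != j -> ~~ adj i j -> ltB (R i B) B -> ltB (R j B) B ->
  R i B <> R j B -> ltB (R i (R j B)) (R j B).
Proof.
move=> hc hij hnij hli hlj hne.
have hDi := lt_Desc hc hli; have hDj := lt_Desc hc hlj.
have hni := Desc_na hc hDi; have hnj := Desc_na hc hDj.
have hP := calB_prs hc.
have hji : j != i by rewrite eq_sym.
have hnji : ~~ adj j i by case: hdiag => _ hs; rewrite hs.
have irr_i : R i B <> B by move=> e; move: hli; rewrite e; apply: ltB_irr.
have hfix : R i (R j B) <> R j B.
  move=> e; rewrite R_comm // in e.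
  have e2 := congr1 (R j) e; rewrite !R_R // in e2; apply: R_prs.
apply: notAsc_lt => //; first exact: calB_R.
move=> [x2 hx2 [c2 hmax2 hle2]].
case: (R_cases hc hnj hx2) => b2 hb2 [ex2 _ _].
case: hDi => b1 hb1 [ci1 hmax1 hlow1].
have cxi : forall b, cc i (refl adj j b) = cc i b.
  by move=> b; rewrite (cc_refl_nadj (adj:=adj) (i:=j) (j:=i)).
have A1 := hle2 _ (R_memb hc hnj hb1).
rewrite ex2 in A1 c2; rewrite !ht_refl ?cxi in A1; rewrite ?cxi in c2.
have rng : forall b, B b -> -1 <= cc i b <= 1 /\ -1 <= cc j b <= 1.
  by move=> b hb; split; [apply: (cc_rangeB hP hni hb) | apply: (cc_rangeB hP hnj hb)].
have [e1 [e2 e3]] : cc j b1 = 1 /\ cc j b2 = -1 /\ ht b2 + 2 = ht b1.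
  have := hlow1 _ hb2; have := rng _ hb1; have := rng _ hb2; move: A1 c2 ci1; lia.
have [hr1 _] := hP _ hb1; have [hr2 _] := hP _ hb2.
have hne12 : b1 <> b2 by move=> e; move: ci1; rewrite e c2; lia.
have eb1 : b1 = refl adj i (refl adj j b2).
  apply: bound => //; first by apply: root_refl; apply: root_refl.
  rewrite !rf_refl_r cxi (calB_orth hc hb1 hb2 hne12) e1 e2 c2 ci1; lia.
have eb1' : b1 = b2 + alpha j + alpha i.
  rewrite eb1 (reflE _ i (refl adj j b2)) cxi c2 reflE e2.
  by apply/rowP => k; rewrite !mxE; ring.
have hc1 := calB_R i hc.
have hm1 : R i B (refl adj i b1) by apply: R_memb.
have hm2 : R i B (refl adj i b1 - alpha j + alpha i).
  have -> : refl adj i b1 - alpha j + alpha i = refl adj i b2.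
    rewrite (reflE _ i b1) ci1 (reflE _ i b2) c2 eb1'.
    by apply/rowP => k; rewrite !mxE; ring.
  exact: R_memb.
have hadm' := hadm hc1 hji hnji (root_refl i hr1) hm1 hm2.
have e4 : R j (R i B) = B by rewrite /R hadm' -/(R i (R i B)) (R_R _ hP).
have e5 := congr1 (R j) e4; rewrite (R_R _ (@R_prs _ _)) in e5.
exact: hne e5.
Qed.



Lemma main_body :
  exists lt : set (vec n) -> set (vec n) -> Prop,
    strict_porder_on calB lt /\
    forall B, calB B -> forall i j : 'I_n,
      let ri := wimg adj [:: i] B in
      let rj := wimg adj [:: j] B in
      let rirj := wimg adj [:: i; j] B in
      let rjri := wimg adj [:: j; i] B in
      let rirjri := wimg adj [:: i; j; i] B in
      ((ri = B \/ lt B ri \/ lt ri B) /\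
       ((exists2 b, B b & (rform adj (alpha i) b = 1 \/ rform adj (alpha i) b = -1))
          -> ri <> B)) /\
      (adj i j -> (forall b, B b -> rform adj (alpha i) b = 0) ->
         (lt rj B -> lt rirj rj) /\ (lt B rj -> lt rj rirj)) /\
      (i != j -> ~~ adj i j -> lt ri B -> lt rj B -> ri <> rj ->
         lt rirj rj /\ lt rirj ri) /\
      (adj i j -> lt ri B -> lt rj B ->
         rirj = rj \/
         [/\ lt rirj rj, lt rjri ri, lt rirjri rirj & lt rirjri rjri]).
Proof.
exists ltB.
split.
  split; first by move=> x _; apply: ltB_irr.
  by move=> x y z _ _ _; apply: ltB_trans.
move=> B hc i j; cbv zeta.
have hP := calB_prs hc.
rewrite (R2 _ _ hP) (R2 j i hP) (R3 _ _ _ hP).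
split; [split | split; [| split]].
- case: (pselect (R i B = B)) => [e | hne]; first by left.
  right; case: (D3 hc hne) => h.
    by right; apply: D1.
  by left; apply: D2.
- move=> [b hb hbv] e.
  have hcb : cc i b = 1 \/ cc i b = -1 by rewrite /cc rformC.
  have hn := cc_ne_alpha hc hb hcb.
  have : R i B b by rewrite /R e.
  apply: (not_in_R hc hn hb); case: hcb => ->; lia.
- move=> hij h0; exact: (part_ii hc hij h0).
- move=> hij hnij hli hlj hne; split.
    exact: (part_iii hc hij hnij hli hlj hne).
  rewrite R_comm //.
  apply: (part_iii hc _ _ hlj hli) => //.
  - by rewrite eq_sym.
  - by case: hdiag => _ hs; rewrite hs.
  - by move=> e; apply: hne.
- move=> hij hli hlj; exact: (part_iv hc hij hli hlj).
Qed.

End Roots.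

Theorem proposition3p1 (n : nat) (adj : rel 'I_n)
  (calB : set (set (vec n))) :
  diagram adj -> spherical adj ->
  W_orbit adj calB -> admissible adj calB ->
  exists lt : set (vec n) -> set (vec n) -> Prop,
    strict_porder_on calB lt /\
    forall B, calB B -> forall i j : 'I_n,
      let ri := wimg adj [:: i] B in
      let rj := wimg adj [:: j] B in
      let rirj := wimg adj [:: i; j] B in
      let rjri := wimg adj [:: j; i] B in
      let rirjri := wimg adj [:: i; j; i] B in
      (* (i) *)
      ((ri = B \/ lt B ri \/ lt ri B) /\
       ((exists2 b, B b & (rform adj (alpha i) b = 1 \/ rform adj (alpha i) b = -1))
          -> ri <> B)) /\
      (* (ii) *)
      (adj i j -> (forall b, B b -> rform adj (alpha i) b = 0) ->
         (lt rj B -> lt rirj rj) /\ (lt B rj -> lt rj rirj)) /\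
      (* (iii) *)
      (i != j -> ~~ adj i j -> lt ri B -> lt rj B -> ri <> rj ->
         lt rirj rj /\ lt rirj ri) /\
      (* (iv) *)
      (adj i j -> lt ri B -> lt rj B ->
         rirj = rj \/
         [/\ lt rirj rj, lt rjri ri, lt rirjri rirj & lt rirjri rjri]).
Proof.
by move=> hd hs hW ha; apply: main_body.
Qed.
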